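(* Let $\Pi$ be a finite, satisfiable set of linear constraints over $x_1,\dots,x_D$, let $\mathrm{CL}$ be the constraint layer built from $\Pi$ and the ordering $x_1,\dots,x_D$, and let $\mathrm{CL}^{\ge}$ be the constraint layer built from $\Pi^{\ge}$ and the same ordering. Let $\tilde x\in\mathbb{R}^D$. Then: (1) if $\mathrm{CL}(\tilde x)=\mathrm{CL}^{\ge}(\tilde x)$, then $\mathrm{CL}(\tilde x)$ is optimal with respect to $\Pi$; (2) otherwise, $\mathrm{CL}(\tilde x)$ tends to $\mathrm{CL}^{\ge}(\tilde x)$ as the $\epsilon$ values used to compute $\mathrm{CL}(\tilde x)$ tend to $0$ (i.e., regarding $\mathrm{CL}(\tilde x)$, with all other aspects of the computation fixed, as a function of the $\epsilon$ values $\epsilon_1,\dots,\epsilon_k$, one has $\lim_{(\epsilon_1,\dots,\epsilon_k)\to 0}\mathrm{CL}(\tilde x)=\mathrm{CL}^{\ge}(\tilde x)$).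
   Context: A constraint is a linear inequality $\phi:\ \sum_{k=1}^D w_k x_k + b \unrhd 0$ with $w_k,b\in\mathbb{R}$ and $\unrhd\in\{\ge,>\}$; it is strict if $\unrhd$ is $>$. A point $\tilde x\in\mathbb{R}^D$ satisfies $\phi$ if $\sum_k w_k\tilde x_k+b\unrhd 0$, and satisfies a set $\Pi$ if it satisfies every member; $\Pi$ is satisfiable if some point satisfies it. $\Pi^{\ge}$ denotes the set obtained from $\Pi$ by replacing each strict constraint $\sum_kw_kx_k+b>0$ by $\sum_kw_kx_k+b\ge0$. Variable $x_j$ appears positively (resp. negatively) in $\phi$ if $w_j>0$ (resp. $w_j<0$). For a set $\Gamma$ of constraints, $\Gamma^+_j$ (resp. $\Gamma^-_j$) is the subset in which $x_j$ appears positively (resp. negatively). Reduction: for $\phi^1=\sum_k w^1_kx_k+b^1\unrhd^1 0\in\Gamma^-_j$ and $\phi^2=\sum_k w^2_kx_k+b^2\unrhd^2 0\in\Gamma^+_j$, $red_j(\phi^1,\phi^2)$ is $\sum_{k\ne j}(w^1_k|w^2_j|+w^2_k|w^1_j|)x_k + b^1|w^2_j|+b^2|w^1_j| \unrhd 0$, where $\unrhd$ is $\ge$ if both $\unrhd^1,\unrhd^2$ are $\ge$, and $>$ otherwise. Sets $\Pi_i$ (for a constraint set $\Pi$): $\Pi_D=\Pi$, and for $i<D$, with $j=i+1$, $\Pi_i=(\Pi_j\setminus(\Pi^-_j\cup\Pi^+_j))\cup\{red_j(\phi^1,\phi^2):\phi^1\in\Pi^-_j,\phi^2\in\Pi^+_j\}$,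 where $\Pi^\pm_j$ means $(\Pi_j)^\pm_j$. (Thus only $x_1,\dots,x_i$ occur in $\Pi_i$; we write $\Pi_i^\pm$ for $(\Pi_i)^\pm_i$.) For $\phi=\sum_kw_kx_k+b\unrhd0$ with $w_i\neq0$, let $\varepsilon^\phi_i=-\sum_{k\ne i}(w_k/w_i)x_k-b/w_i$; for $\phi\in\Pi_i$ it depends only on $x_1,\dots,x_{i-1}$. Constraint layer built from $\Pi$: given $\tilde x\in\mathbb{R}^D$, $\mathrm{CL}(\tilde x)\in\mathbb{R}^D$ is computed coordinatewise for $i=1,\dots,D$. Let $\varepsilon^\phi_i(\mathrm{CL}(\tilde x))$ denote $\varepsilon^\phi_i$ evaluated at the already computed values $\mathrm{CL}(\tilde x)_1,\dots,\mathrm{CL}(\tilde x)_{i-1}$, and set $ub_i=\min\{\varepsilon^\phi_i(\mathrm{CL}(\tilde x)):\phi\in\Pi_i^-\}$, $lb_i=\max\{\varepsilon^\phi_i(\mathrm{CL}(\tilde x)):\phi\in\Pi_i^+\}$ (with $\min\emptyset=+\infty$, $\max\emptyset=-\infty$). Then $\mathrm{CL}(\tilde x)_i=\min^i(\max^i(\tilde x_i,lb_i),ub_i)$, where $\max^i(a,lb_i)$ equals $v=\max(a,lb_i)$ unless some strict $\phi\in\Pi_i^+$ has $v=\varepsilon^\phi_i(\mathrm{CL}(\tilde x))$, in which case it equals $v+\epsilon$ for a chosen $\epsilon>0$ small enough that $lb_i+\epsilon< ub_i$; symmetrically $\min^i(a,ub_i)$ equals $u=\min(a,ub_i)$ unless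 some strict $\phi\in\Pi_i^-$ has $u=\varepsilon^\phi_i(\mathrm{CL}(\tilde x))$, in which case it equals $u-\epsilon$ for a chosen $\epsilon>0$ small enough that $ub_i-\epsilon>lb_i$. The chosen positive numbers are the $\epsilon$ values used to compute $\mathrm{CL}(\tilde x)$. Since $\Pi^{\ge}$ has no strict constraints, $\mathrm{CL}^{\ge}$ uses no $\epsilon$ values: $\mathrm{CL}^{\ge}(\tilde x)_i=\min(\max(\tilde x_i,lb_i),ub_i)$ with bounds computed from $\Pi^{\ge}$. Optimality: for a set of constraints $\Gamma$ and $\tilde x\in\mathbb{R}^D$, a point $y\in\mathbb{R}^D$ is optimal (for $\tilde x$) with respect to $\Gamma$ if $y$ satisfies $\Gamma$ and there is no $\tilde x'\neq y$ satisfying $\Gamma$ with $|\tilde x'_i-\tilde x_i|\le|y_i-\tilde x_i|$ for all $i=1,\dots,D$. *)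

(* Defs.v *)
(* Coordinates x_1..x_D of the paper are the ordinals 0..D-1. *)
From Stdlib Require List.
From mathcomp Require Import all_boot all_order all_algebra.
Set Implicit Arguments. Unset Strict Implicit. Unset Printing Implicit Defensive.
Import Order.TTheory GRing.Theory Num.Theory.
Local Open Scope ring_scope.

Section ConstraintLayer.
Context {R : realFieldType} {D : nat}.

(* A linear constraint  sum_k w_k x_k + b (>= or >) 0 ; strict iff cstrict. *)
Record constr := Constr { cw : 'I_D -> R; cb : R; cstrict : bool }.

Definition cval (phi : constr) (x : 'I_D -> R) : R :=
  \sum_(k < D) cw phi k * x k + cb phi.

Definition sat (phi : constr) (x : 'I_D -> R) : Prop :=
  if cstrict phi then 0 < cval phi x else 0 <= cval phi x.

Definition sat_set (Pi : seq constr) (x : 'I_D -> R) : Prop :=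
  forall phi, List.In phi Pi -> sat phi x.

Definition satisfiable (Pi : seq constr) : Prop := exists x, sat_set Pi x.

(* Pi^>= : every strict constraint made non-strict *)
Definition relax (Pi : seq constr) : seq constr :=
  [seq Constr (cw phi) (cb phi) false | phi <- Pi].

(* red_j(phi1, phi2), phi1 in Gamma^-_j, phi2 in Gamma^+_j *)
Definition red (j : 'I_D) (phi1 phi2 : constr) : constr :=
  Constr (fun k => if k == j then 0
                   else cw phi1 k * `|cw phi2 j| + cw phi2 k * `|cw phi1 j|)
         (cb phi1 * `|cw phi2 j| + cb phi2 * `|cw phi1 j|)
         (cstrict phi1 || cstrict phi2).

Definition negs (j : 'I_D) (G : seq constr) := [seq phi <- G | cw phi j < 0].
Definition poss (j : 'I_D) (G : seq constr) := [seq phi <- G | 0 < cw phi j].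

(* one Fourier-Motzkin step eliminating variable j *)
Definition elim (j : 'I_D) (G : seq constr) : seq constr :=
  [seq phi <- G | cw phi j == 0] ++
  [seq red j phi1 phi2 | phi1 <- negs j G, phi2 <- poss j G].

(* elimFrom Pi n = Pi_{D-n} *)
Fixpoint elimFrom (Pi : seq constr) (n : nat) : seq constr :=
  match n with
  | 0 => Pi
  | n'.+1 =>
    match (insub (D - n'.+1)%N : option 'I_D) with
    | Some j => elim j (elimFrom Pi n')
    | None => elimFrom Pi n'
    end
  end.

Definition PiSet (Pi : seq constr) (i : nat) : seq constr := elimFrom Pi (D - i)%N.

Definition epsv (phi : constr) (k : 'I_D) (y : 'I_D -> R) : R :=
  - (\sum_(l < D | l != k) (cw phi l / cw phi k) * y l) - cb phi / cw phi k.

Definition maxlist (s : seq R) : option R :=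
  if s is a :: s' then Some (foldr Num.max a s') else None.
Definition minlist (s : seq R) : option R :=
  if s is a :: s' then Some (foldr Num.min a s') else None.

Section Step.
Variables (Pi : seq constr) (el eu : 'I_D -> R) (x : 'I_D -> R).
(* k : the coordinate being computed (paper's i = k+1);
   y : the already computed values (coordinates < k), others set to 0 *)
Variables (k : 'I_D) (y : 'I_D -> R).

Definition Gk := PiSet Pi k.+1.
Definition lbk : option R := maxlist [seq epsv phi k y | phi <- poss k Gk].
Definition ubk : option R := minlist [seq epsv phi k y | phi <- negs k Gk].

Definition vk : R := if lbk is Some l then Num.max (x k) l else x k.
Definition trig_lo : bool :=
  has (fun phi => cstrict phi && (vk == epsv phi k y)) (poss k Gk).
Definition maxk : R := if trig_lo then vk + el k else vk.

Definition uk : R := if ubk is Some u then Num.min maxk u else maxk.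
Definition trig_hi : bool :=
  has (fun phi => cstrict phi && (uk == epsv phi k y)) (negs k Gk).
Definition CLk : R := if trig_hi then uk - eu k else uk.

(* a < b in the extended reals, None meaning -oo (left) / +oo (right) *)
Definition olt (a b : option R) : Prop :=
  match a, b with Some a', Some b' => a' < b' | _, _ => True end.

Definition step_ok : Prop :=
  0 < el k /\ 0 < eu k /\
  (trig_lo -> olt (omap (fun l => l + el k) lbk) ubk) /\
  (trig_hi -> olt lbk (omap (fun u => u - eu k) ubk)).
End Step.

Fixpoint CLaux (Pi : seq constr) (el eu x : 'I_D -> R) (m : nat) : 'I_D -> R :=
  match m with
  | 0 => fun _ => 0
  | m'.+1 => let y := CLaux Pi el eu x m' in
             fun l => if (l : nat) == m' then CLk Pi el eu x l y else y l
  end.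

(* CL(x) built from Pi, with epsilon values el (used by max^i) and
   eu (used by min^i) at coordinate i *)
Definition CL (Pi : seq constr) (el eu x : 'I_D -> R) : 'I_D -> R :=
  CLaux Pi el eu x D.

Definition admissible (Pi : seq constr) (el eu x : 'I_D -> R) : Prop :=
  forall k : 'I_D, step_ok Pi el eu x k (CLaux Pi el eu x k).

Definition CLge (Pi : seq constr) (x : 'I_D -> R) : 'I_D -> R :=
  CL (relax Pi) (fun _ => 0) (fun _ => 0) x.

Definition optimal (G : seq constr) (x y : 'I_D -> R) : Prop :=
  sat_set G y /\
  forall x', sat_set G x' -> (forall i, `|x' i - x i| <= `|y i - x i|) ->
             forall i, x' i = y i.

End ConstraintLayer.

(* Main.v *)
Require Import Defs.
From Stdlib Require List.
From mathcomp Require Import all_boot all_order all_algebra.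
From mathcomp Require Import ring lra zify.
Import Order.TTheory GRing.Theory Num.Theory.
Set Implicit Arguments. Unset Strict Implicit. Unset Printing Implicit Defensive.
Local Open Scope ring_scope.

Section Aux.
Context {R : realFieldType} {D : nat}.
Local Notation constr := (@constr R D).

Lemma In_filter (T : Type) (p : pred T) (s : seq T) a :
  List.In a (filter p s) <-> List.In a s /\ p a.
Proof.
elim: s => [|b s IH] /=; first by split => [[]|[]].
case pb: (p b) => /=.
- split.
  + case=> [<-|/IH [H1 H2]]; [by split; [left|]|by split; [right|]].
  + by case=> [[->|H] Hp]; [left|right; apply/IH].
- rewrite IH; split; first by case=> H1 H2; split; [right|].
  by case=> [[E|H] Hp]; [subst; rewrite pb in Hp|].
Qed.

Lemma In_allpairs (S T U : Type) (f : S -> T -> U) s t c :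
  List.In c [seq f a b | a <- s, b <- t] <->
  exists a b, List.In a s /\ List.In b t /\ c = f a b.
Proof.
elim: s => [|a s IH] /=.
  by split => [[]|[a [b [[] _]]]].
rewrite List.in_app_iff IH; split.
- case=> [/List.in_map_iff [b [<- Hb]]|[a' [b [H1 [H2 ->]]]]].
  + by exists a, b; do !split; [left|].
  + by exists a', b; do !split; [right|].
- case=> [a' [b [[E|H1] [H2 ->]]]].
  + by left; subst; apply/List.in_map_iff; exists b.
  + by right; exists a', b.
Qed.

Lemma cval_ext (phi : constr) y z : (forall l, y l = z l) -> cval phi y = cval phi z.
Proof. by move=> H; rewrite /cval; congr (_ + _); apply: eq_bigr => l _; rewrite H. Qed.

Lemma sat_ext (phi : constr) y z : (forall l, y l = z l) -> sat phi y -> sat phi z.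
Proof. by move=> H; rewrite /sat (cval_ext _ H). Qed.

Lemma cval_red j (n p : constr) y : cw n j < 0 -> 0 < cw p j ->
  cval (red j n p) y = `|cw p j| * cval n y + `|cw n j| * cval p y.
Proof.
move=> hn hp; rewrite /cval /= !mulrDr !mulr_sumr addrACA -big_split /=.
congr (_ + _); last by rewrite mulrC [_ * cb p]mulrC.
apply: eq_bigr => l _; case: eqP => [->|_].
  rewrite (gtr0_norm hp) (ltr0_norm hn); ring.
ring.
Qed.

Lemma cval_eps (phi : constr) k y : cw phi k != 0 ->
  cval phi y = cw phi k * (y k - epsv phi k y).
Proof.
move=> hk; rewrite /cval /epsv (bigD1 k) //=.
have -> : \sum_(l < D | l != k) cw phi l * y l =
          cw phi k * \sum_(l < D | l != k) cw phi l / cw phi k * y l.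
  rewrite mulr_sumr; apply: eq_bigr => l _; field; exact: hk.
set S := \sum_(l < D | l != k) _.
field; exact: hk.
Qed.

Lemma epsv_ext (phi : constr) k y z : (forall l, l != k -> y l = z l) ->
  epsv phi k y = epsv phi k z.
Proof.
by move=> H; rewrite /epsv; congr (- _ - _); apply: eq_bigr => l hl; rewrite H.
Qed.


Lemma sat_red j (n p : constr) y : cw n j < 0 -> 0 < cw p j ->
  sat n y -> sat p y -> sat (red j n p) y.
Proof.
move=> hn hp; rewrite /sat (cval_red y hn hp) /=.
have a0 : 0 < `|cw p j| by rewrite normr_gt0 gt_eqF.
have b0 : 0 < `|cw n j| by rewrite normr_gt0 lt_eqF.
case: (cstrict n); case: (cstrict p) => /= h1 h2.
- have := mulr_gt0 a0 h1; have := mulr_gt0 b0 h2; lra.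
- have := mulr_gt0 a0 h1; have := mulr_ge0 (ltW b0) h2; lra.
- have := mulr_ge0 (ltW a0) h1; have := mulr_gt0 b0 h2; lra.
- have := mulr_ge0 (ltW a0) h1; have := mulr_ge0 (ltW b0) h2; lra.
Qed.

Lemma sat_elim j (G : seq constr) y : sat_set G y -> sat_set (elim j G) y.
Proof.
move=> H phi; rewrite /elim List.in_app_iff; case.
  by move/In_filter=> [/H].
move/In_allpairs=> [n [p [/In_filter [Hn hn] [/In_filter [Hp hp] ->]]]].
by apply: sat_red => //; apply: H.
Qed.

Lemma sat_elimFrom (Pi : seq constr) n y : sat_set Pi y -> sat_set (elimFrom Pi n) y.
Proof.
elim: n => [//|n IH] /= H; case: insub => [j|]; last exact: IH.
by apply: sat_elim; apply: IH.
Qed.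

Lemma sat_PiSet (Pi : seq constr) i y : sat_set Pi y -> sat_set (PiSet Pi i) y.
Proof. exact: sat_elimFrom. Qed.

Lemma elimFrom_zero (Pi : seq constr) n phi : List.In phi (elimFrom Pi n) ->
  forall l : 'I_D, (D - n <= l)%N -> cw phi l = 0.
Proof.
elim: n phi => [|n IH] phi /=.
  by move=> _ l; rewrite subn0 leqNgt ltn_ord.
case: insubP => [j hj ej|hD]; last first.
  move=> Hin l hl; apply: IH => //; move: hD (ltn_ord l); lia.
rewrite /elim List.in_app_iff; case.
  move/In_filter=> [Hin /eqP hz] l hl.
  case: (eqVneq l j) => [->//|lj]; apply: IH => //.
  have : val l != val j by [].
  by rewrite ej; move: hl; rewrite leq_eqVlt eq_sym => /orP [->|] //; lia.
move/In_allpairs=> [a [b [/In_filter [Ha _] [/In_filter [Hb _] ->]]]] l hl /=.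
case: eqP => // /eqP lj.
have hl' : (D - n <= l)%N.
  have : val l != val j by [].
  by rewrite ej; move: hl; rewrite leq_eqVlt eq_sym => /orP [->|] //; lia.
by rewrite (IH _ Ha l hl') (IH _ Hb l hl') !mul0r addr0.
Qed.

Lemma PiSet_zero (Pi : seq constr) i phi : List.In phi (PiSet Pi i) -> (i <= D)%N ->
  forall l : 'I_D, (i <= l)%N -> cw phi l = 0.
Proof.
move=> H hi l hl; apply: (elimFrom_zero H); lia.
Qed.

Lemma PiSet_succ (Pi : seq constr) (k : 'I_D) :
  PiSet Pi k = elim k (PiSet Pi k.+1).
Proof.
rewrite /PiSet.
have -> : (D - k = (D - k.+1).+1)%N by have := ltn_ord k; lia.
rewrite /=; case: insubP => [u _ eu|].
  congr elim; apply: val_inj; rewrite eu; have -> : val k = (k : nat) by []; have := ltn_ord k; lia.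
by have := ltn_ord k; lia.
Qed.

Lemma PiSet_D (Pi : seq constr) : PiSet Pi D = Pi.
Proof. by rewrite /PiSet subnn. Qed.


Lemma foldr_max_ub (a : R) s : forall b, List.In b (a :: s) -> b <= foldr Num.max a s.
Proof.
elim: s => [|c s IH] b /=; first by case=> [->|[]].
case=> [<-|[<-|H]]; rewrite le_max.
- by apply/orP; right; apply: IH; left.
- by rewrite lexx.
- by apply/orP; right; apply: IH; right.
Qed.

Lemma foldr_max_in (a : R) s : List.In (foldr Num.max a s) (a :: s).
Proof.
elim: s => [|c s IH] /=; first by left.
case: leP => _; last by right; left.
by case: IH => [H|H]; [left|right; right].
Qed.

Lemma foldr_min_lb (a : R) s : forall b, List.In b (a :: s) -> foldr Num.min a s <= b.
Proof.
elim: s => [|c s IH] b /=; first by case=> [->|[]].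
case=> [<-|[<-|H]]; rewrite ge_min.
- by apply/orP; right; apply: IH; left.
- by rewrite lexx.
- by apply/orP; right; apply: IH; right.
Qed.

Lemma foldr_min_in (a : R) s : List.In (foldr Num.min a s) (a :: s).
Proof.
elim: s => [|c s IH] /=; first by left.
case: leP => _; first by right; left.
by case: IH => [H|H]; [left|right; right].
Qed.

Lemma maxlist_ub (s : seq R) m : maxlist s = Some m -> forall b, List.In b s -> b <= m.
Proof. by case: s => [//|a s] [<-]; apply: foldr_max_ub. Qed.
Lemma maxlist_in (s : seq R) m : maxlist s = Some m -> List.In m s.
Proof. by case: s => [//|a s] [<-]; apply: foldr_max_in. Qed.
Lemma minlist_lb (s : seq R) m : minlist s = Some m -> forall b, List.In b s -> m <= b.
Proof. by case: s => [//|a s] [<-]; apply: foldr_min_lb. Qed.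
Lemma minlist_in (s : seq R) m : minlist s = Some m -> List.In m s.
Proof. by case: s => [//|a s] [<-]; apply: foldr_min_in. Qed.
Lemma maxlist_None (s : seq R) : maxlist s = None -> s = [::].
Proof. by case: s. Qed.
Lemma minlist_None (s : seq R) : minlist s = None -> s = [::].
Proof. by case: s. Qed.


Lemma has_In (T : Type) (f : pred T) s : has f s -> exists a, List.In a s /\ f a.
Proof.
elim: s => [//|a s IH] /= /orP [h|/IH [b [H1 H2]]].
  by exists a; split; [left|].
by exists b; split; [right|].
Qed.

Lemma hasN_In (T : Type) (f : pred T) s a : ~~ has f s -> List.In a s -> ~~ f a.
Proof.
elim: s => [//|b s IH] /=; rewrite negb_or => /andP [h1 h2] [<-//|H].
exact: IH.
Qed.

Lemma red_eps k (n p : constr) y : cw n k < 0 -> 0 < cw p k -> sat (red k n p) y ->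
  if cstrict n || cstrict p then epsv p k y < epsv n k y else epsv p k y <= epsv n k y.
Proof.
move=> hn hp; rewrite /sat (cval_red y hn hp) (cval_eps y (ltr0_neq0 hn)) (cval_eps y (lt0r_neq0 hp)).
rewrite (gtr0_norm hp) (ltr0_norm hn) /=.
have c0 : 0 < cw p k * - cw n k by apply: mulr_gt0; rewrite ?oppr_gt0.
have -> : cw p k * (cw n k * (y k - epsv n k y)) + - cw n k * (cw p k * (y k - epsv p k y))
   = (cw p k * - cw n k) * (epsv n k y - epsv p k y) by ring.
case: ifP => _.
  by rewrite pmulr_rgt0 // subr_gt0.
by rewrite pmulr_rge0 // subr_ge0.
Qed.

Lemma In_poss j (G : seq constr) p : List.In p (poss j G) -> List.In p G /\ 0 < cw p j.
Proof. by move/In_filter. Qed.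
Lemma In_negs j (G : seq constr) p : List.In p (negs j G) -> List.In p G /\ cw p j < 0.
Proof. by move/In_filter. Qed.

Lemma red_in_elim j (G : seq constr) n p : List.In n (negs j G) -> List.In p (poss j G) ->
  List.In (red j n p) (elim j G).
Proof.
move=> Hn Hp; rewrite /elim List.in_app_iff; right.
by apply/In_allpairs; exists n, p.
Qed.


Lemma In_map (S T : Type) (f : S -> T) s a : List.In a s -> List.In (f a) (map f s).
Proof. by elim: s => [//|b s IH] /= [->|H]; [left|right; apply: IH]. Qed.

Lemma In_map_iff (S T : Type) (f : S -> T) s b :
  List.In b (map f s) -> exists a, f a = b /\ List.In a s.
Proof.
elim: s => [//|a s IH] /= [<-|/IH [c [H1 H2]]]; first by exists a; split; [|left].
by exists c; split; [|right].
Qed.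

Lemma lbk_ge (Pi : seq constr) k y p : List.In p (poss k (Gk Pi k)) ->
  exists l, lbk Pi k y = Some l /\ epsv p k y <= l.
Proof.
move=> Hp; rewrite /lbk; case E: maxlist => [l|].
  by exists l; split => //; apply: (maxlist_ub E); apply: In_map.
by move: (maxlist_None E) (In_map (fun phi => epsv phi k y) Hp) => ->.
Qed.

Lemma ubk_le (Pi : seq constr) k y n : List.In n (negs k (Gk Pi k)) ->
  exists u, ubk Pi k y = Some u /\ u <= epsv n k y.
Proof.
move=> Hp; rewrite /ubk; case E: minlist => [l|].
  by exists l; split => //; apply: (minlist_lb E); apply: In_map.
by move: (minlist_None E) (In_map (fun phi => epsv phi k y) Hp) => ->.
Qed.

Lemma lbk_in (Pi : seq constr) k y l : lbk Pi k y = Some l ->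
  exists p, List.In p (poss k (Gk Pi k)) /\ l = epsv p k y.
Proof.
move=> /maxlist_in H; have [p [E Hp]] := In_map_iff H.
by exists p; split; [|rewrite -E].
Qed.

Lemma ubk_in (Pi : seq constr) k y u : ubk Pi k y = Some u ->
  exists n, List.In n (negs k (Gk Pi k)) /\ u = epsv n k y.
Proof.
move=> /minlist_in H; have [p [E Hp]] := In_map_iff H.
by exists p; split; [|rewrite -E].
Qed.

Lemma CLk_bounds (Pi : seq constr) el eu x (k : 'I_D) y :
  step_ok Pi el eu x k y -> sat_set (elim k (Gk Pi k)) y ->
  (forall p, List.In p (poss k (Gk Pi k)) ->
     if cstrict p then epsv p k y < CLk Pi el eu x k y
     else epsv p k y <= CLk Pi el eu x k y) /\
  (forall n, List.In n (negs k (Gk Pi k)) ->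
     if cstrict n then CLk Pi el eu x k y < epsv n k y
     else CLk Pi el eu x k y <= epsv n k y).
Proof.
move=> [el0 [eu0 [_ okhi]]] Hsat.
set P := poss k (Gk Pi k); set N := negs k (Gk Pi k).
have HPN : forall p n, List.In p P -> List.In n N ->
    if cstrict n || cstrict p then epsv p k y < epsv n k y
    else epsv p k y <= epsv n k y.
  move=> p n Hp Hn; have [_ hp] := In_poss Hp; have [_ hn] := In_negs Hn.
  by apply: red_eps => //; apply: Hsat; apply: red_in_elim.
have wk : forall (b : bool) (a c : R), (if b then a < c else a <= c) -> a <= c.
  by move=> [] a c // /ltW.
have F1 : forall p, List.In p P -> epsv p k y <= vk Pi x k y.
  move=> p Hp; have [l [E hl]] := lbk_ge y Hp.
  by rewrite /vk E; apply: (le_trans hl); rewrite le_max lexx orbT.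
have F2 : forall p, List.In p P -> if cstrict p then epsv p k y < maxk Pi el x k y
                                  else epsv p k y <= maxk Pi el x k y.
  move=> p Hp; rewrite /maxk; case tl: (trig_lo Pi x k y).
    have h := F1 p Hp; have : epsv p k y < vk Pi x k y + el k by lra.
    by case: (cstrict p) => // /ltW.
  have h := F1 p Hp; case sp: (cstrict p) => //.
  rewrite lt_neqAle h andbT eq_sym.
  by have := hasN_In (negbT tl) Hp; rewrite /= sp.
have F3 : forall n, List.In n N -> uk Pi el x k y <= epsv n k y.
  move=> n Hn; have [u [E hu]] := ubk_le y Hn.
  by rewrite /uk E; apply: le_trans hu; rewrite ge_min lexx orbT.
have F4 : forall p, List.In p P -> if cstrict p then epsv p k y < uk Pi el x k y
                                  else epsv p k y <= uk Pi el x k y.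
  move=> p Hp; rewrite /uk; case E: (ubk Pi k y) => [u|]; last exact: F2.
  case: (leP (maxk Pi el x k y) u) => _; first exact: F2.
  have [n [Hn ->]] := ubk_in E.
  by have := HPN p n Hp Hn; case: (cstrict p); rewrite ?orbT //; apply: wk.
rewrite /CLk; case: ifP => th.
  have [n1 [Hn1 /andP [sn1 /eqP eun1]]] := has_In th.
  have [u [Eu hu]] := ubk_le y Hn1.
  have uku : uk Pi el x k y = u.
    apply/le_anti; rewrite {2}eun1 hu andbT.
    by rewrite /uk Eu ge_min lexx orbT.
  rewrite uku; split.
    move=> p Hp; have [l [El hl]] := lbk_ge y Hp.
    have := okhi th; rewrite El Eu /= => h.
    have : epsv p k y < u - eu k by apply: le_lt_trans h.
    by case: (cstrict p) => // /ltW.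
  move=> n Hn; have [u' [Eu' hu']] := ubk_le y Hn; rewrite Eu in Eu'; case: Eu' => ?; subst u'.
  have : u - eu k < epsv n k y by lra.
  by case: (cstrict n) => // /ltW.
split; first exact: F4.
move=> n Hn; have h := F3 n Hn; case sn: (cstrict n) => //.
rewrite lt_neqAle h andbT.
by have := hasN_In (negbT th) Hn; rewrite /= sn.
Qed.


Lemma CLaux_succ (Pi : seq constr) el eu x (k l : 'I_D) :
  CLaux Pi el eu x k.+1 l =
  if l == k then CLk Pi el eu x k (CLaux Pi el eu x k) else CLaux Pi el eu x k l.
Proof.
rewrite /=; case: (eqVneq l k) => [->|lk]; first by rewrite eqxx.
by have -> : ((l : nat) == k) = false by apply/negbTE.
Qed.

Lemma sat_step (Pi : seq constr) el eu x (k : 'I_D) :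
  step_ok Pi el eu x k (CLaux Pi el eu x k) ->
  sat_set (PiSet Pi k) (CLaux Pi el eu x k) ->
  sat_set (PiSet Pi k.+1) (CLaux Pi el eu x k.+1).
Proof.
move=> ok; rewrite PiSet_succ => Hs.
set y := CLaux Pi el eu x k; set y' := CLaux Pi el eu x k.+1.
have [HP HN] := CLk_bounds ok Hs.
have ey : forall l, l != k -> y' l = y l.
  by move=> l lk; rewrite /y' CLaux_succ (negbTE lk).
have eyk : y' k = CLk Pi el eu x k y by rewrite /y' CLaux_succ eqxx.
move=> phi Hphi.
have eeps : epsv phi k y' = epsv phi k y by apply: epsv_ext.
case: (ltgtP (cw phi k) 0) => hk.
- have Hn : List.In phi (negs k (Gk Pi k)) by apply/In_filter.
  have := HN _ Hn; rewrite /sat (cval_eps y' (ltr0_neq0 hk)) eeps eyk.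
  case: (cstrict phi) => h.
    by rewrite nmulr_rgt0 // subr_lt0.
  by rewrite nmulr_rge0 // subr_le0.
- have Hp : List.In phi (poss k (Gk Pi k)) by apply/In_filter.
  have := HP _ Hp; rewrite /sat (cval_eps y' (lt0r_neq0 hk)) eeps eyk.
  case: (cstrict phi) => h.
    by rewrite pmulr_rgt0 // subr_gt0.
  by rewrite pmulr_rge0 // subr_ge0.
- have Hf : List.In phi (elim k (Gk Pi k)).
    by rewrite /elim List.in_app_iff; left; apply/In_filter; split => //; apply/eqP.
  have := Hs _ Hf; rewrite /sat.
  suff -> : cval phi y' = cval phi y by [].
  rewrite /cval; congr (_ + _); apply: eq_bigr => l _.
  by case: (eqVneq l k) => [->|lk]; [rewrite hk !mul0r|rewrite ey].
Qed.

Lemma cval_zero (phi : constr) y : (forall l, cw phi l = 0) -> cval phi y = cb phi.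
Proof. by move=> H; rewrite /cval big1 ?add0r // => l _; rewrite H mul0r. Qed.

Lemma CL_sat (Pi : seq constr) el eu x : satisfiable Pi -> admissible Pi el eu x ->
  sat_set Pi (CL Pi el eu x).
Proof.
move=> [z Hz] adm.
suff H : forall m, (m <= D)%N -> sat_set (PiSet Pi m) (CLaux Pi el eu x m).
  by have := H D (leqnn D); rewrite PiSet_D.
elim=> [|m IH] hm.
  move=> phi Hphi; have := @sat_PiSet Pi 0%N z Hz phi Hphi; rewrite /sat.
  have hz : forall l, cw phi l = 0 by move=> l; apply: (PiSet_zero Hphi).
  by rewrite !cval_zero.
have := sat_step (adm (Ordinal hm)) (IH (ltnW hm)).
by [].
Qed.


Definition clamp (lo hi : option R) (a : R) : R :=
  let v := if lo is Some l then Num.max a l else a in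
  if hi is Some u then Num.min v u else v.

Lemma CLk_zero (Q : seq constr) x k y :
  CLk Q (fun _ => 0) (fun _ => 0) x k y = clamp (lbk Q k y) (ubk Q k y) (x k).
Proof.
rewrite /CLk /uk /maxk /vk /clamp.
by case: ifP => _; case: ifP => _; rewrite ?addr0 ?subr0.
Qed.

Lemma far (a c t : R) : (a <= c <= t) \/ (t <= c <= a) -> `|t - a| <= `|c - a| -> t = c.
Proof.
case=> /andP [h1 h2].
  have h3 := le_trans h1 h2.
  rewrite !ger0_norm ?subr_ge0 //.
  by move=> h; lra.
have h3 := le_trans h1 h2.
rewrite !ler0_norm ?subr_le0 //.
by move=> h; lra.
Qed.

Lemma aat (a t : R) : a <= a <= t \/ t <= a <= a.
Proof. by case: (lerP t a) => ta; [right|left]; rewrite lexx ?ta ?(ltW ta). Qed.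

Lemma clamp_unique lo hi (a t : R) : (forall l, lo = Some l -> l <= t) ->
  (forall u, hi = Some u -> t <= u) -> `|t - a| <= `|clamp lo hi a - a| -> t = clamp lo hi a.
Proof.
move=> Hl Hu; apply: far; rewrite /clamp.
case: lo Hl => [l|] Hl; case: hi Hu => [u|] Hu.
- have hl := Hl l erefl; have hu := Hu u erefl.
  case: (leP a l) => al.
    have -> : Num.min l u = l by apply/min_idPl; apply: le_trans hu.
    by left; rewrite al hl.
  case: (leP a u) => au.
    exact: aat.
  by right; rewrite hu ltW.
- have hl := Hl l erefl; case: (leP a l) => al.
    by left; rewrite al hl.
  exact: aat.
- have hu := Hu u erefl; case: (leP a u) => au.
    exact: aat.
  by right; rewrite hu ltW.
- exact: aat.
Qed.


Lemma CLaux_stable (Q : seq constr) el eu x m n (l : 'I_D) : (l < m)%N -> (m <= n)%N ->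
  CLaux Q el eu x n l = CLaux Q el eu x m l.
Proof.
move=> lm; elim: n => [|n IH] hn.
  by move: hn; rewrite leqn0 => /eqP ->.
case: (leqP m n) => h.
  rewrite /= -(IH h); suff -> : ((l : nat) == n) = false by [].
  by apply/negbTE; move: lm h; lia.
by have -> : m = n.+1 by move: hn h; lia.
Qed.

Lemma epsv_prefix (phi : constr) (k : 'I_D) y z : (forall l : 'I_D, (l < k)%N -> y l = z l) ->
  (forall l : 'I_D, (k < l)%N -> cw phi l = 0) -> epsv phi k y = epsv phi k z.
Proof.
move=> Hyz Hz; rewrite /epsv; congr (- _ - _); apply: eq_bigr => l lk.
case: (ltngtP l k) => h; first by rewrite Hyz.
  by rewrite Hz // !mul0r.
have e : l = k by apply: val_inj.
by move: lk; rewrite e eqxx.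
Qed.

Lemma eps_le_sat (phi : constr) k y : 0 < cw phi k -> sat phi y -> epsv phi k y <= y k.
Proof.
move=> hp; rewrite /sat (cval_eps y (lt0r_neq0 hp)).
case: (cstrict phi) => h.
  by move: h; rewrite pmulr_rgt0 // subr_gt0 => /ltW.
by move: h; rewrite pmulr_rge0 // subr_ge0.
Qed.

Lemma eps_ge_sat (phi : constr) k y : cw phi k < 0 -> sat phi y -> y k <= epsv phi k y.
Proof.
move=> hp; rewrite /sat (cval_eps y (ltr0_neq0 hp)).
case: (cstrict phi) => h.
  by move: h; rewrite nmulr_rgt0 // subr_lt0 => /ltW.
by move: h; rewrite nmulr_rge0 // subr_le0.
Qed.

Lemma CL0_opt (Q : seq constr) x x' : sat_set Q x' ->
  (forall i, `|x' i - x i| <= `|CL Q (fun _ => 0) (fun _ => 0) x i - x i|) ->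
  forall i, x' i = CL Q (fun _ => 0) (fun _ => 0) x i.
Proof.
move=> Hs Hd.
set z := CLaux Q (fun _ => 0) (fun _ => 0) x.
suff H : forall m, (m <= D)%N -> forall l : 'I_D, (l < m)%N -> x' l = z D l.
  by move=> i; apply: (H D (leqnn D)).
elim=> [//|m IH] hm l lm.
case: (ltngtP l m) => h; first exact: IH (ltnW hm) l h.
  by move: lm h; lia.
set k := Ordinal hm.
have lk : l = k by apply: val_inj.
subst l.
have pre : forall l' : 'I_D, (l' < k)%N -> x' l' = z k l'.
  move=> l' hl'; rewrite (IH (ltnW hm) l' hl'); apply: CLaux_stable => //.
  exact: ltnW.
have HG := @sat_PiSet Q k.+1 x' Hs.
have zk : forall phi, List.In phi (Gk Q k) -> epsv phi k x' = epsv phi k (z k).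
  move=> phi Hphi; apply: epsv_prefix => // l' hl'.
  exact: (PiSet_zero Hphi hm).
have eD : z D k = z k.+1 k by apply: CLaux_stable.
rewrite eD.
have E : z k.+1 k = CLk Q (fun _ => 0) (fun _ => 0) x k (z k) by rewrite /z CLaux_succ eqxx.
rewrite E CLk_zero; apply: clamp_unique.
- move=> l' /lbk_in [p [Hp ->]]; have [HpG hp] := In_poss Hp.
  by rewrite -zk //; apply: eps_le_sat => //; apply: HG.
- move=> u /ubk_in [n [Hn ->]]; have [HnG hn] := In_negs Hn.
  by rewrite -zk //; apply: eps_ge_sat => //; apply: HG.
- by rewrite -CLk_zero -E -eD; exact: Hd k.
Qed.


Definition rlx (phi : constr) : constr := Constr (cw phi) (cb phi) false.

Lemma sat_relax (Pi : seq constr) y : sat_set Pi y -> sat_set (relax Pi) y.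
Proof.
move=> H phi Hphi; have [p [<- Hp]] := In_map_iff Hphi; have := H p Hp; rewrite /sat /=.
by case: (cstrict p) => // /ltW.
Qed.

Lemma allpairs_rlx j (s t : seq constr) :
  [seq red j p1 p2 | p1 <- map rlx s, p2 <- map rlx t] =
  map rlx [seq red j p1 p2 | p1 <- s, p2 <- t].
Proof.
elim: s => [//|a s IH] /=; rewrite map_cat IH -!map_comp; congr (_ ++ _).
Qed.

Lemma elim_relax j (G : seq constr) : elim j (relax G) = relax (elim j G).
Proof.
rewrite /elim /relax map_cat /negs /poss !filter_map -allpairs_rlx.
by [].
Qed.

Lemma PiSet_relax (Pi : seq constr) i : PiSet (relax Pi) i = relax (PiSet Pi i).
Proof.
rewrite /PiSet; elim: (D - i)%N => [//|n IH] /=.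
by case: insub => [j|]; rewrite ?IH ?elim_relax.
Qed.

Lemma lbk_relax (Pi : seq constr) k y : lbk (relax Pi) k y = lbk Pi k y.
Proof.
rewrite /lbk /Gk PiSet_relax /relax /poss filter_map -map_comp.
by [].
Qed.

Lemma ubk_relax (Pi : seq constr) k y : ubk (relax Pi) k y = ubk Pi k y.
Proof.
rewrite /ubk /Gk PiSet_relax /relax /negs filter_map -map_comp.
by [].
Qed.


Definition olip (e : R) (a b : option R) : Prop :=
  match a, b with Some a, Some b => `|a - b| <= e | None, None => True | _, _ => False end.

Lemma abs_facts (a b : R) : a - b <= `|a - b| /\ b - a <= `|a - b|.
Proof. by split; [apply: ler_norm|rewrite distrC; apply: ler_norm]. Qed.

Lemma max_lip (a b c : R) : `|Num.max a c - Num.max b c| <= `|a - b|.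
Proof.
have [f1 f2] := abs_facts a b.
by case: (leP a c) => h1; case: (leP b c) => h2;
  rewrite ler_norml; apply/andP; split; lra.
Qed.

Lemma min_lip (a b c : R) : `|Num.min a c - Num.min b c| <= `|a - b|.
Proof.
have [f1 f2] := abs_facts a b.
by case: (leP a c) => h1; case: (leP b c) => h2;
  rewrite ler_norml; apply/andP; split; lra.
Qed.


Lemma min_lip2 (v v' u u' e : R) : `|v - v'| <= e -> `|u - u'| <= e ->
  `|Num.min v u - Num.min v' u'| <= e.
Proof.
rewrite !ler_norml => /andP [h1 h2] /andP [h3 h4].
by case: (leP v u) => g1; case: (leP v' u') => g2; apply/andP; split; lra.
Qed.

Lemma max_lip2 (v v' u u' e : R) : `|v - v'| <= e -> `|u - u'| <= e ->
  `|Num.max v u - Num.max v' u'| <= e.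
Proof.
rewrite !ler_norml => /andP [h1 h2] /andP [h3 h4].
by case: (leP v u) => g1; case: (leP v' u') => g2; apply/andP; split; lra.
Qed.

Lemma clamp_lip e lo lo' hi hi' (a : R) : 0 <= e -> olip e lo lo' -> olip e hi hi' ->
  `|clamp lo hi a - clamp lo' hi' a| <= e.
Proof.
move=> e0 hl hh.
have hv : `|(if lo is Some l then Num.max a l else a) -
             (if lo' is Some l then Num.max a l else a)| <= e.
  case: lo lo' hl => [l|] [l'|] //= hl; last by rewrite subrr normr0.
  by apply: max_lip2 => //; rewrite subrr normr0.
rewrite /clamp; case: hi hi' hh => [u|] [u'|] //= hu.
exact: min_lip2.
Qed.

Lemma CLk_close (Pi : seq constr) el eu x k y : 0 <= el k -> 0 <= eu k ->
  `|CLk Pi el eu x k y - clamp (lbk Pi k y) (ubk Pi k y) (x k)| <= el k + eu k.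
Proof.
move=> h1 h2.
have ec : clamp (lbk Pi k y) (ubk Pi k y) (x k) =
   (if ubk Pi k y is Some u then Num.min (vk Pi x k y) u else vk Pi x k y) by [].
have H1 : `|uk Pi el x k y - clamp (lbk Pi k y) (ubk Pi k y) (x k)| <= el k.
  rewrite ec /uk /maxk.
  have hm : `|(if trig_lo Pi x k y then vk Pi x k y + el k else vk Pi x k y) - vk Pi x k y| <= el k.
    by case: ifP => _; rewrite ?subrr ?normr0 // addrC addKr ger0_norm.
  case: (ubk Pi k y) => [u|] //.
  by apply: min_lip2 => //; rewrite subrr normr0.
rewrite /CLk; case: ifP => _.
  have := ler_distD (uk Pi el x k y) (uk Pi el x k y - eu k) (clamp (lbk Pi k y) (ubk Pi k y) (x k)).
  have -> : `|uk Pi el x k y - eu k - uk Pi el x k y| = eu k.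
    by rewrite addrC addKr normrN ger0_norm.
  by rewrite distrC => h; apply: le_trans h _; lra.
by have := normr_ge0 (eu k); lra.
Qed.


Definition Sc (phi : constr) (k : 'I_D) : R := \sum_(l < D) `|cw phi l / cw phi k|.

Lemma Sc_ge0 phi k : 0 <= Sc phi k.
Proof. by apply: sumr_ge0 => l _; apply: normr_ge0. Qed.

Lemma epsv_lip (phi : constr) k y z e : 0 <= e -> (forall l, `|y l - z l| <= e) ->
  `|epsv phi k y - epsv phi k z| <= Sc phi k * e.
Proof.
move=> e0 H.
have -> : epsv phi k y - epsv phi k z =
   \sum_(l < D | l != k) cw phi l / cw phi k * (z l - y l).
  rewrite /epsv.
  have -> : \sum_(l < D | l != k) cw phi l / cw phi k * (z l - y l) =
    \sum_(l < D | l != k) cw phi l / cw phi k * z l -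
    \sum_(l < D | l != k) cw phi l / cw phi k * y l.
    by rewrite -sumrB; apply: eq_bigr => l _; rewrite mulrBr.
  ring.
apply: le_trans (ler_norm_sum _ _ _) _.
rewrite /Sc mulr_suml big_mkcond /=; apply: ler_sum => l _.
case: ifP => _; last by apply: mulr_ge0 => //; apply: normr_ge0.
rewrite normrM; apply: ler_wpM2l; first exact: normr_ge0.
by rewrite distrC.
Qed.

Lemma maxlist_lip (P : seq constr) f g e :
  (forall p, List.In p P -> `|f p - g p| <= e) ->
  olip e (maxlist (map f P)) (maxlist (map g P)).
Proof.
case: P => [//|p0 P] /= H.
suff : `|foldr Num.max (f p0) (map f P) - foldr Num.max (g p0) (map g P)| <= e by [].
elim: P H => [|p P IH] H /=; first by apply: H; left.
apply: max_lip2; first by apply: H; right; left.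
by apply: IH => q [<-|Hq]; apply: H; [left|right; right].
Qed.

Lemma minlist_lip (P : seq constr) f g e :
  (forall p, List.In p P -> `|f p - g p| <= e) ->
  olip e (minlist (map f P)) (minlist (map g P)).
Proof.
case: P => [//|p0 P] /= H.
suff : `|foldr Num.min (f p0) (map f P) - foldr Num.min (g p0) (map g P)| <= e by [].
elim: P H => [|p P IH] H /=; first by apply: H; left.
apply: min_lip2; first by apply: H; right; left.
by apply: IH => q [<-|Hq]; apply: H; [left|right; right].
Qed.


Definition Tc (Pi : seq constr) : R :=
  \sum_(k < D) \sum_(phi <- PiSet Pi k.+1) Sc phi k.

Lemma Tc_ge0 Pi : 0 <= Tc Pi.
Proof. by apply: sumr_ge0 => k _; apply: sumr_ge0 => p _; apply: Sc_ge0. Qed.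

Lemma Sc_le_T (Pi : seq constr) (k : 'I_D) phi : List.In phi (PiSet Pi k.+1) -> Sc phi k <= Tc Pi.
Proof.
move=> H.
have Hin : Sc phi k <= \sum_(q <- PiSet Pi k.+1) Sc q k.
  elim: (PiSet Pi k.+1) H => [//|q s IH] /= [->|H]; rewrite big_cons.
    by rewrite lerDl; apply: sumr_ge0 => p _; apply: Sc_ge0.
  by apply: le_trans (IH H) _; rewrite lerDr Sc_ge0.
rewrite /Tc (bigD1 k) //=; apply: le_trans Hin _; rewrite lerDl.
by apply: sumr_ge0 => j _; apply: sumr_ge0 => p _; apply: Sc_ge0.
Qed.

Lemma CL_close (Pi : seq constr) el eu x d : admissible Pi el eu x ->
  (forall i, el i <= d /\ eu i <= d) -> 0 <= d ->
  forall m l, `|CLaux Pi el eu x m l - CLaux (relax Pi) (fun _ => 0) (fun _ => 0) x m l|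
     <= (Tc Pi + 2) ^+ m * d.
Proof.
move=> adm hd d0.
have T0 := Tc_ge0 Pi.
elim=> [|m IH] l /=; first by rewrite subrr normr0 expr0 mul1r.
set C := (Tc Pi + 2) ^+ m.
have C1 : 1 <= C by apply: exprn_ege1; lra.
have Cd : 0 <= C * d by apply: mulr_ge0 => //; lra.
have key : C * d <= (Tc Pi + 2) ^+ m.+1 * d.
  rewrite exprS -/C -mulrA ler_peMl //; lra.
case: eqP => _; last exact: le_trans (IH l) key.
set y' := CLaux Pi el eu x m; set y := CLaux (relax Pi) (fun _ => 0) (fun _ => 0) x m.
rewrite CLk_zero lbk_relax ubk_relax.
have [ok1 [ok2 _]] := adm l.
have [hel heu] := hd l.
have h1 := @CLk_close Pi el eu x l y' (ltW ok1) (ltW ok2).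
have h2 : `|clamp (lbk Pi l y') (ubk Pi l y') (x l) - clamp (lbk Pi l y) (ubk Pi l y) (x l)|
          <= Tc Pi * (C * d).
  have epsb : forall p, List.In p (PiSet Pi l.+1) ->
      `|epsv p l y' - epsv p l y| <= Tc Pi * (C * d).
    move=> p Hp; apply: le_trans (epsv_lip _ _ Cd IH) _.
    by apply: ler_wpM2r => //; apply: Sc_le_T.
  apply: clamp_lip; first by apply: mulr_ge0.
    by apply: maxlist_lip => p /In_poss [Hp _]; apply: epsb.
  by apply: minlist_lip => p /In_negs [Hp _]; apply: epsb.
have := ler_distD (clamp (lbk Pi l y') (ubk Pi l y') (x l))
  (CLk Pi el eu x l y') (clamp (lbk Pi l y) (ubk Pi l y) (x l)).
rewrite exprS -/C => h3.
apply: le_trans h3 _.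
have : 2 * d <= 2 * (C * d) by rewrite ler_pM2l //; rewrite -{1}(mul1r d) ler_wpM2r.
have -> : (Tc Pi + 2) * C * d = Tc Pi * (C * d) + 2 * (C * d) by ring.
move: h1; rewrite distrC; lra.
Qed.

End Aux.

Theorem theorem3 (R : realFieldType) (D : nat) (Pi : seq (@constr R D))
    (x : 'I_D -> R) :
  satisfiable Pi ->
  forall el eu : 'I_D -> R, admissible Pi el eu x ->
    ((forall i, CL Pi el eu x i = CLge Pi x i) ->
       optimal Pi x (CL Pi el eu x)) /\
    (~ (forall i, CL Pi el eu x i = CLge Pi x i) ->
       forall eta : R, 0 < eta -> exists2 delta : R, 0 < delta &
         forall el' eu' : 'I_D -> R, admissible Pi el' eu' x ->
           (forall i, el' i < delta /\ eu' i < delta) ->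
           forall i, `|CL Pi el' eu' x i - CLge Pi x i| < eta).
Proof.
move=> Hsat el eu adm; split.
  move=> Heq; split; first exact: CL_sat.
  move=> x' Hx' Hd i.
  have Hd' : forall i, `|x' i - x i| <=
      `|CL (relax Pi) (fun _ => 0) (fun _ => 0) x i - x i|.
    by move=> j; have := Hd j; rewrite Heq.
  by rewrite (CL0_opt (sat_relax Hx') Hd') Heq.
move=> _ eta eta0.
set K := (Tc Pi + 2) ^+ D.
have K0 : 0 < K by apply: exprn_gt0; have := Tc_ge0 Pi; lra.
have d0 : 0 < eta / (2 * K) by apply: divr_gt0 => //; apply: mulr_gt0.
exists (eta / (2 * K)) => // el' eu' adm' hd i.
have hd' : forall i, el' i <= eta / (2 * K) /\ eu' i <= eta / (2 * K).
  by move=> j; have [h1 h2] := hd j; split; apply: ltW.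
have := CL_close adm' hd' (ltW d0) D i; rewrite -/K.
have -> : K * (eta / (2 * K)) = eta / 2 by field; rewrite ?lt0r_neq0.
move=> h; apply: le_lt_trans h _; lra.
Qed.
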